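(* Let $G$ be a simple and nonabelian finite subgroup of $\mathrm{PGL}(3,\mathbb{C})$. Then there is a subgroup $\widetilde{G} \subset \mathrm{SL}(3,\mathbb{C})$ with $\pi(\widetilde{G}) = G$ such that every projective plane curve invariant under $G$ is defined by a homogeneous polynomial invariant under $\widetilde{G}$.
   Context: $\pi : \mathrm{SL}(3,\mathbb{C})\to\mathrm{PGL}(3,\mathbb{C})$ is the natural homomorphism, and $\mathrm{PGL}(3,\mathbb{C})$ acts on $\mathbb{P}^2$ via $[A]\cdot(a:b:c) = [A(a,b,c)^t]$. A projective plane curve is a nonzero effective divisor on $\mathbb{P}^2$; it is invariant under $G$ if $\sigma_* C = C$ for all $\sigma \in G$. For $A \in \mathrm{GL}(3,\mathbb{C})$ and a homogeneous polynomial $f$, set $f^A(\mathbf{x}) = f(A\mathbf{x})$ (with $\mathbf{x}$ the column vector $(x,y,z)^t$); $f$ is invariant under $\widetilde{G}$ if $f^A = f$ for all $A \in \widetilde{G}$. A curve $C$ is defined by $f$ if $C$ is the divisor of zeros of $f$. *)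

(* Defs.v *)
From HB Require Import structures.
From mathcomp Require Import all_boot all_order all_algebra all_fingroup all_solvable.
From mathcomp Require Import reals.
From mathcomp Require Import complex.
From mathcomp Require Import mpoly.
Set Implicit Arguments. Unset Strict Implicit. Unset Printing Implicit Defensive.
Import GRing.Theory.
Local Open Scope ring_scope.

(* The complex numbers are modelled as R[i] = complex R for a realType R
   (any realType is (isomorphic to) the real numbers). *)

(* Ternary forms: polynomials in x, y, z (variables 'X_0, 'X_1, 'X_2). *)
Notation poly3 C := {mpoly C[3]}.

(* f^A (x) = f (A x), with x the column vector (x, y, z)^t :
   substitute 'X_i := \sum_j A i j 'X_j. *)
Definition mx_act (C : comNzRingType) (A : 'M[C]_3) (f : poly3 C) : poly3 C :=
  f \mPo [tuple \sum_(j < 3) A i j *: 'X_j | i < 3].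

Definition mdvd (C : comNzRingType) (p q : poly3 C) : Prop :=
  exists r : poly3 C, q = r * p.

(* units of C[x,y,z] (C a field) are the nonzero constants, i.e. msize = 1 *)
Definition mirreducible (C : comNzRingType) (p : poly3 C) : Prop :=
  (1 < msize p)%N /\
  forall a b : poly3 C, p = a * b -> (msize a <= 1)%N \/ (msize b <= 1)%N.

(* The divisor of zeros of a nonzero form f on P^2 is
   sum_p ord_p(f) [V(p)] over irreducible (homogeneous) p up to scalars;
   two divisors of zeros are equal iff all these multiplicities agree. *)
Definition same_divisor (C : comNzRingType) (f g : poly3 C) : Prop :=
  forall p : poly3 C, mirreducible p ->
    forall k : nat, mdvd (p ^+ k) f <-> mdvd (p ^+ k) g.

(* Push-forward of the divisor of zeros of f under the automorphism [A] of P^2: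
   [A]_* div(f) = div(f^{A^{-1}}). *)
Definition pushforward_poly (C : fieldType) (A : 'M[C]_3) (f : poly3 C) :=
  mx_act (invmx A) f.

(* Equality in PGL(3,C) (for invertible matrices): A ~ B iff A = c B, c != 0 *)
Definition proj_eq (C : fieldType) (A B : 'M[C]_3) : Prop :=
  exists c : C, c != 0 /\ A = c *: B.

(* A finite subgroup of PGL(3,C), given as a finite group gT together with an
   injective group homomorphism gT -> PGL(3,C), described by a choice of
   representative matrices rho g (a faithful projective representation). *)
Definition proj_faithful_rep (C : fieldType) (gT : finGroupType)
  (rho : gT -> 'M[C]_3) : Prop :=
  [/\ forall g, rho g \in unitmx,
      forall g h, proj_eq (rho (g * h)%g) (rho g *m rho h)
    & forall g, proj_eq (rho g) 1%:M -> g = 1%g].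

Definition SL3_subgroup (C : fieldType) (Gt : 'M[C]_3 -> Prop) : Prop :=
  [/\ Gt 1%:M,
      forall A B, Gt A -> Gt B -> Gt (A *m B),
      forall A, Gt A -> Gt (invmx A)
    & forall A, Gt A -> \det A = 1].

Definition proj_image_eq (C : fieldType) (gT : finGroupType)
  (rho : gT -> 'M[C]_3) (Gt : 'M[C]_3 -> Prop) : Prop :=
  (forall A, Gt A -> exists g, proj_eq A (rho g)) /\
  (forall g, exists A, Gt A /\ proj_eq A (rho g)).

(* Main.v *)
Require Import Defs.
From HB Require Import structures.
From mathcomp Require Import all_boot all_order all_algebra all_fingroup all_solvable.
From mathcomp Require Import reals.
From mathcomp Require Import complex.
From mathcomp Require Import mpoly.
From mathcomp Require Import fraction generic_quotient.
From Stdlib Require Import Classical ClassicalEpsilon.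
From mathcomp Require Import zify ring.
Set Implicit Arguments. Unset Strict Implicit. Unset Printing Implicit Defensive.
Import GRing.Theory.
Local Open Scope ring_scope.
Local Open Scope quotient_scope.
Section Basic.
Variable R : idomainType.
Definition dv (a b : R) : Prop := exists r, b = r * a.
Definition irr (p : R) : Prop := p != 0 /\ p \isn't a GRing.unit /\
  forall a b, p = a * b -> a \is a GRing.unit \/ b \is a GRing.unit.
Definition primeP : Prop := forall p, irr p -> forall a b, dv p (a * b) -> dv p a \/ dv p b.
Definition measP (mu : R -> nat) : Prop :=
  (forall a b, a != 0 -> b != 0 -> mu (a * b) = (mu a + mu b)%N) /\
  (forall a, a != 0 -> (mu a = 0%N <-> a \is a GRing.unit)).
Definition UFD : Prop := (exists mu, measP mu) /\ primeP.

Lemma dv_refl a : dv a a. Proof. by exists 1; rewrite mul1r. Qed.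
Lemma dv0 a : dv a 0. Proof. by exists 0; rewrite mul0r. Qed.
Lemma dvD a b c : dv a b -> dv a c -> dv a (b + c).
Proof. by move=> [r ->] [s ->]; exists (r + s); rewrite mulrDl. Qed.
Lemma dvN a b : dv a b -> dv a (- b).
Proof. by move=> [r ->]; exists (- r); rewrite mulNr. Qed.
Lemma dvMl a b c : dv a b -> dv a (c * b).
Proof. by move=> [r ->]; exists (c * r); rewrite mulrA. Qed.
Lemma dvMr a b c : dv a b -> dv a (b * c).
Proof. by move=> [r ->]; exists (r * c); rewrite mulrAC. Qed.
Lemma dv_trans a b c : dv a b -> dv b c -> dv a c.
Proof. by move=> [r ->] [s ->]; exists (s * r); rewrite mulrA. Qed.
Lemma dv_mulr a b : dv a (b * a). Proof. by exists b. Qed.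
Lemma dv_mull a b : dv a (a * b). Proof. by exists b; rewrite mulrC. Qed.

Lemma dv_sum (I : Type) (r : seq I) (P : pred I) (F : I -> R) a :
  (forall i, P i -> dv a (F i)) -> dv a (\sum_(i <- r | P i) F i).
Proof.
move=> H; elim/big_ind: _ => //; [exact: dv0 | exact: dvD].
Qed.

Lemma irr_factor mu : measP mu -> forall c, c != 0 -> c \isn't a GRing.unit ->
  exists pi c', [/\ irr pi, c = pi * c' & (mu c' < mu c)%N].
Proof.
move=> [Hm Hu] c.
have [n] := ubnP (mu c); elim: n c => // n IH c Hn c0 cu.
have [ic|nic] := classic (irr c).
  exists c, 1; split; rewrite ?mulr1 //.
  have := Hu 1 (oner_neq0 _); rewrite unitr1 => -[_ ->] //.
  rewrite lt0n; apply/eqP => /(Hu _ c0) h; by rewrite h in cu.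
have : exists a b, c = a * b /\ a \isn't a GRing.unit /\ b \isn't a GRing.unit.
  apply: NNPP => hn; apply: nic; split => //; split => // a b hab.
  apply: NNPP => hab2; apply: hn; exists a, b; split => //.
  by split; apply/negP => h; apply: hab2; [left|right].
move=> [a [b [cab [au bu]]]]; subst c.
have a0 : a != 0 by apply: contraNneq c0 => ->; rewrite mul0r.
have b0 : b != 0 by apply: contraNneq c0 => ->; rewrite mulr0.
have mub : (0 < mu b)%N by rewrite lt0n; apply/eqP => /(Hu _ b0) h; rewrite h in bu.
rewrite Hm // in Hn *.
have [pi [a' [ip Ea lt]]] : exists pi a', [/\ irr pi, a = pi * a' & (mu a' < mu a)%N].
  by apply: IH => //; lia.
subst a.
have a'0 : a' != 0 by apply: contraNneq a0 => ->; rewrite mulr0.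
exists pi, (a' * b); split; first by []; first by rewrite mulrA.
by rewrite Hm //; lia.
Qed.

End Basic.

Lemma least (P : nat -> Prop) : (exists i, P i) -> exists i, P i /\ forall k, (k < i)%N -> ~ P k.
Proof.
move=> [m Pm]; apply: NNPP => hn.
have H : forall n k, (k <= n)%N -> ~ P k.
  elim=> [|n IH] k.
    rewrite leqn0 => /eqP -> P0; apply: hn; exists 0%N; split => // k'; by [].
  rewrite leq_eqVlt => /orP [/eqP -> Pn|]; last by rewrite ltnS; apply: IH.
  apply: hn; exists n.+1; split => // k'; rewrite ltnS; exact: IH.
exact (H m m (leqnn m) Pm).
Qed.

Section Lift.
Variable R : idomainType.
Variable mu : R -> nat.
Hypothesis Hmu : measP mu.
Hypothesis Hpr : primeP R.

Lemma dvC_coef (c : R) (A : {poly R}) : dv c%:P A <-> forall i, dv c A`_i.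
Proof.
split=> [[r ->] i|H]; first by rewrite coefMC; apply: dv_mulr.
pose r i := proj1_sig (constructive_indefinite_description _ (H i)).
have Hr i : A`_i = r i * c by rewrite /r; case: constructive_indefinite_description.
exists (\poly_(i < size A) r i); apply/polyP => i.
rewrite coefMC coef_poly; case: ltnP => hi; first exact: Hr.
by rewrite mul0r nth_default.
Qed.

Lemma prime_const c : irr c -> forall A B : {poly R}, dv c%:P (A * B) -> dv c%:P A \/ dv c%:P B.
Proof.
move=> ic A B /dvC_coef HAB; apply: NNPP => hn.
have nA : ~ dv c%:P A by move=> h; apply: hn; left.
have nB : ~ dv c%:P B by move=> h; apply: hn; right.
have [i [Pi Hi]] : exists i, ~ dv c A`_i /\ forall k, (k < i)%N -> ~ ~ dv c A`_k.
  apply: least; apply: NNPP => h; apply: nA; apply/dvC_coef => i0.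
  by apply: NNPP => h'; apply: h; exists i0.
have [j [Pj Hj]] : exists j, ~ dv c B`_j /\ forall k, (k < j)%N -> ~ ~ dv c B`_k.
  apply: least; apply: NNPP => h; apply: nB; apply/dvC_coef => i0.
  by apply: NNPP => h'; apply: h; exists i0.
have := HAB (i + j)%N; rewrite coefM.
have hi : (i < (i + j).+1)%N by rewrite ltnS leq_addr.
rewrite (bigD1 (Ordinal hi)) //= addKn => H.
have Hrest : dv c (\sum_(k < (i + j).+1 | k != Ordinal hi) A`_k * B`_(i + j - k)).
  apply: dv_sum => k hk.
  have [lt|ge] := ltnP k i.
    by apply: dvMr; apply: NNPP; apply: Hi.
  have ne : (k : nat) != i by apply: contra hk => /eqP e; apply/eqP/val_inj.
  have lt2 : (i + j - k < j)%N.
    have := ltn_ord k; rewrite ltnS => hk2.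
    have gt : (i < k)%N by rewrite ltn_neqAle eq_sym ne.
    lia.
  by apply: dvMl; apply: NNPP; apply: Hj.
have : dv c (A`_i * B`_j).
  have -> : A`_i * B`_j = (A`_i * B`_j + \sum_(k < (i + j).+1 | k != Ordinal hi) A`_k * B`_(i + j - k)) - \sum_(k < (i + j).+1 | k != Ordinal hi) A`_k * B`_(i + j - k) by rewrite addrK.
  by apply: dvD => //; apply: dvN.
by case/(Hpr ic).
Qed.


Definition mup (P : {poly R}) : nat := ((size P).-1 + mu (lead_coef P))%N.

Lemma measP_poly : measP mup.
Proof.
case: Hmu => Hm Hu; split.
  move=> a b a0 b0; rewrite /mup size_mul // lead_coefM Hm ?lead_coef_eq0 //.
  have := size_poly_gt0 a; have := size_poly_gt0 b; rewrite a0 b0.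
  move: (size a) (size b) => [|m] // [|n] //= _ _; rewrite addnS /=; lia.
move=> a a0; rewrite /mup poly_unitE; split.
  move=> /eqP; rewrite addn_eq0 => /andP [/eqP s1 /eqP m0].
  have sa : size a = 1%N.
    by move: s1; have := size_poly_gt0 a; rewrite a0; case: (size a) => [|[|]].
  rewrite sa eqxx /=; have := (Hu (lead_coef a)); rewrite lead_coef_eq0 a0 lead_coefE sa /=.
  by rewrite lead_coefE sa in m0; move=> h; apply/(h isT).
move=> /andP [/eqP sa ua]; rewrite sa /= add0n; apply/(Hu _).
  by rewrite lead_coef_eq0.
by rewrite lead_coefE sa.
Qed.

Lemma polyC_unit (c : R) : (c%:P \is a GRing.unit) = (c \is a GRing.unit).
Proof.
rewrite poly_unitE size_polyC coefC eqxx.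
have [->|c0] := eqVneq c 0; first by rewrite unitr0 andbF.
by [].
Qed.

Lemma primitive_irr (P : {poly R}) : irr P -> (1 < size P)%N ->
  forall pi, irr pi -> ~ dv pi%:P P.
Proof.
move=> [P0 [Pu Hirr]] sP pi [pi0 [piu _]] [r Er].
case: (Hirr _ _ Er) => [ru|]; last by rewrite polyC_unit (negbTE piu).
move: ru; rewrite poly_unitE => /andP [/eqP sr _].
have r0 : r != 0 by rewrite -size_poly_eq0 sr.
move: sP; rewrite Er size_mul ?polyC_eq0 // sr size_polyC pi0 //.
Qed.

Notation tof := (@FracField.tofrac R).
Notation K := {fraction R}.
Definition iota (P : {poly R}) : {poly K} := map_poly tof P.

Lemma tof_inj : injective tof.
Proof. by move=> x y /eqP; rewrite tofrac_eq => /eqP. Qed.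

Lemma iota_inj : injective iota.
Proof. apply: map_inj_poly; [exact: tof_inj | exact: rmorph0]. Qed.

Lemma size_iota P : size (iota P) = size P.
Proof. apply: size_map_inj_poly; [exact: tof_inj | exact: rmorph0]. Qed.

Lemma iotaM P Q : iota (P * Q) = iota P * iota Q.
Proof. exact: rmorphM. Qed.

Lemma iotaC c : iota c%:P = (tof c)%:P.
Proof. exact: map_polyC. Qed.

Lemma frac_repr (x : K) : exists a b : R, b != 0 /\ x = tof a / tof b.
Proof.
elim/quotW: x => r.
exists (r.1), (r.2); split; first exact: denom_ratioP.
unlock FracField.tofrac.
have h1 := FracField.pi_inv (Ratio \d_r 1).
have h2 := FracField.pi_mul (Ratio \n_r 1) (FracField.invf (Ratio \d_r 1)).
rewrite /FracField.mulf /FracField.invf in h1 h2.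
rewrite !numden_Ratio ?oner_neq0 ?denom_ratioP // mulr1 mul1r in h1 h2.
rewrite Ratio_numden in h2.
rewrite h2 h1. reflexivity.
Qed.

Lemma clear_den (u : {poly K}) : exists c v, c != 0 /\ iota v = tof c *: u.
Proof.
elim/poly_ind: u => [|u k [c [v [c0 Ev]]]].
  by exists 1, 0; rewrite oner_neq0 scaler0 /iota map_poly0.
have [a [b [b0 ->]]] := frac_repr k.
exists (c * b), (b%:P * v * 'X + (c * a)%:P); split; first by rewrite mulf_neq0.
rewrite /iota rmorphD rmorphM rmorphM /= map_polyX map_polyC -/(iota v) Ev /=.
rewrite map_polyC /= scalerDr rmorphM /=.
have bf : tof b != 0 by rewrite tofrac_eq0.
rewrite tofracM; congr (_ + _).
  by rewrite mul_polyC scalerA scalerAl [tof c * tof b]mulrC.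
rewrite -mul_polyC -polyCM; congr (_%:P).
by rewrite mulrA [tof c * tof b * tof a]mulrAC mulfK.
Qed.




Lemma cancel_const n : forall c, (mu c <= n)%N -> c != 0 ->
  forall (P G H : {poly R}), c%:P * P = G * H ->
  exists G' H', [/\ P = G' * H', size G' = size G & size H' = size H].
Proof.
case: Hmu => Hm Hu.
elim: n => [|n IH] c Hc c0 P G H E.
  have cu : c \is a GRing.unit by apply/(Hu _ c0); apply/eqP; rewrite -leqn0.
  exists (c^-1%:P * G), H; split.
  - by rewrite -mulrA -E mulrA -polyCM mulVr // mul1r.
  - by rewrite size_Cmul // invr_eq0.
  - by [].
have [cu|ncu] := boolP (c \is a GRing.unit).
  exists (c^-1%:P * G), H; split.
  - by rewrite -mulrA -E mulrA -polyCM mulVr // mul1r.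
  - by rewrite size_Cmul // invr_eq0.
  - by [].
have [pi [c' [ipi Ec lt]]] := irr_factor Hmu c0 ncu.
have pi0 : pi != 0 by case: ipi.
have piP0 : pi%:P != 0 by rewrite polyC_eq0.
have c'0 : c' != 0 by apply: contraNneq c0 => e; rewrite Ec e mulr0.
have hd : dv pi%:P (G * H) by exists (c'%:P * P); rewrite -E Ec polyCM [pi%:P * _]mulrC mulrAC.
case: (prime_const ipi hd) => [[G1 EG]|[H1 EH]].
  have E2 : c'%:P * P = G1 * H.
    apply: (mulfI piP0).
    by rewrite [LHS]mulrA -polyCM -Ec E EG [G1 * _]mulrC -mulrA.
  have [G' [H' [EP sG sH]]] := IH c' (leq_trans lt Hc) c'0 P G1 H E2.
  exists G', H'; split => //; by rewrite sG EG mulrC size_Cmul.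
have E2 : c'%:P * P = G * H1.
  apply: (mulfI piP0).
  by rewrite [LHS]mulrA -polyCM -Ec E EH [H1 * _]mulrC mulrCA.
have [G' [H' [EP sG sH]]] := IH c' (leq_trans lt Hc) c'0 P G H1 E2.
exists G', H'; split => //; by rewrite sH EH mulrC size_Cmul.
Qed.

Definition primitive (P : {poly R}) := forall pi, irr pi -> ~ dv pi%:P P.

Lemma gauss_div n : forall c, (mu c <= n)%N -> c != 0 ->
  forall (P A v : {poly R}), primitive P -> c%:P * A = v * P -> dv P A.
Proof.
case: Hmu => Hm Hu.
elim: n => [|n IH] c Hc c0 P A v pP E.
  have cu : c \is a GRing.unit by apply/(Hu _ c0); apply/eqP; rewrite -leqn0.
  by exists (c^-1%:P * v); rewrite -mulrA -E mulrA -polyCM mulVr // mul1r.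
have [cu|ncu] := boolP (c \is a GRing.unit).
  by exists (c^-1%:P * v); rewrite -mulrA -E mulrA -polyCM mulVr // mul1r.
have [pi [c' [ipi Ec lt]]] := irr_factor Hmu c0 ncu.
have pi0 : pi != 0 by case: ipi.
have piP0 : pi%:P != 0 by rewrite polyC_eq0.
have c'0 : c' != 0 by apply: contraNneq c0 => e; rewrite Ec e mulr0.
have hd : dv pi%:P (v * P) by exists (c'%:P * A); rewrite -E Ec polyCM [pi%:P * _]mulrC mulrAC.
case: (prime_const ipi hd) => [[v1 Ev]|]; last by move/(pP _ ipi).
have E2 : c'%:P * A = v1 * P.
  apply: (mulfI piP0).
  by rewrite [LHS]mulrA -polyCM -Ec E Ev [v1 * _]mulrC -mulrA.
exact: IH c' (leq_trans lt Hc) c'0 P A v1 pP E2.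
Qed.

Lemma gauss_transfer (P A : {poly R}) : primitive P -> iota P %| iota A -> dv P A.
Proof.
move=> pP /dvdpP [w Ew].
have [c [v [c0 Ev]]] := clear_den w.
have E : c%:P * A = v * P.
  apply: iota_inj; rewrite !iotaM iotaC Ev Ew mul_polyC scalerAl //.
exact: gauss_div (leqnn _) c0 P A v pP E.
Qed.

Lemma primeP_poly : primeP [the idomainType of {poly R}].
Proof.
move=> P iP A B hAB.
have [P0 [Pu Hirr]] := iP.
have [sP|sP] := leqP (size P) 1.
  have EP := size1_polyC sP.
  have ic : irr P`_0.
    split; first by apply: contraNneq P0 => e; rewrite EP e.
    split; first by apply: contra Pu => u; rewrite EP polyC_unit.
    move=> a b e; have := Hirr a%:P b%:P; rewrite -polyCM -e -EP.
    by case=> // h; [left|right]; rewrite -polyC_unit.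
  by rewrite EP in hAB *; apply: prime_const.
have pP : primitive P by exact: primitive_irr.
have hd : iota P %| iota A * iota B.
  by case: hAB => r Er; rewrite -iotaM Er iotaM dvdp_mull.
have [cop|ncop] := boolP (coprimep (iota P) (iota A)).
  by right; apply: gauss_transfer => //; rewrite -(Gauss_dvdpr _ cop).
left; apply: gauss_transfer => //.
set g := gcdp (iota P) (iota A).
have iP0 : iota P != 0 by rewrite -size_poly_eq0 size_iota size_poly_eq0.
have /dvdpP [h Eh] : g %| iota P by exact: dvdp_gcdl.
have [c1 [G [c10 EG]]] := clear_den g.
have [c2 [H [c20 EH]]] := clear_den h.
have E : (c1 * c2)%:P * P = G * H.
  apply: iota_inj; rewrite !iotaM iotaC EG EH Eh -scalerAl -scalerAr scalerA.
  by rewrite mul_polyC tofracM [g * h]mulrC.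
have [G' [H' [EP sG sH]]] := cancel_const (leqnn _) (mulf_neq0 c10 c20) E.
have tc1 : tof c1 != 0 by rewrite tofrac_eq0.
have tc2 : tof c2 != 0 by rewrite tofrac_eq0.
have sg : size G' = size g by rewrite sG -size_iota EG size_scale.
have sh : size H' = size h by rewrite sH -size_iota EH size_scale.
case: (Hirr _ _ EP) => /[dup] uu; rewrite poly_unitE => /andP [/eqP s1 _].
  by move: ncop; rewrite /coprimep -/g -sg s1.
have h1 : size h = 1%N by rewrite -sh.
have [h0 h00 Eh0] := size_poly1P _ (introT eqP h1).
have eg : g = (h0^-1)%:P * iota P.
  by rewrite mul_polyC Eh Eh0 mul_polyC scalerA mulVf // scale1r.
apply: (dvdp_trans _ (dvdp_gcdr (iota P) (iota A))).
by rewrite -/g eg; apply: dvdp_mull; apply: dvdpp.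
Qed.

End Lift.

Lemma UFD_poly (R : idomainType) : UFD R -> UFD [the idomainType of {poly R}].
Proof.
move=> [[mu Hmu] Hpr]; split; first by exists (mup mu); exact: measP_poly.
exact: primeP_poly Hmu Hpr.
Qed.

Lemma UFD_field (F : fieldType) : UFD F.
Proof.
split.
  exists (fun _ => 0%N); split => // a a0; split => // _; by rewrite unitfE.
by move=> p [p0 [pu _]]; move: pu; rewrite unitfE p0.
Qed.

Section Div.
Variable R : idomainType.
Hypothesis HU : UFD R.

Lemma dv_pow_coprime (q pi x : R) (k : nat) : irr q -> ~ dv q pi -> dv (q ^+ k) (x * pi) -> dv (q ^+ k) x.
Proof.
move=> iq nq; elim: k x => [|k IH] x; first by move=> _; exists x; rewrite expr0 mulr1.
move=> h.
have q0 : q != 0 by case: iq.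
have : dv q (x * pi) by apply: dv_trans h; exists (q ^+ k); rewrite exprS mulrC.
case/(proj2 HU _ iq) => // -[x1 Ex]; subst x.
have : dv (q ^+ k) (x1 * pi).
  case: h => r Er; exists r; apply: (mulIf q0).
  by rewrite mulrAC Er exprS [q * _]mulrC mulrA.
move/IH => [r Er]; exists r; by rewrite Er exprS [q * _]mulrC mulrA.
Qed.

Lemma div_main : forall f g : R, f != 0 -> g != 0 ->
  (forall p, irr p -> forall k, dv (p ^+ k) f -> dv (p ^+ k) g) -> dv f g.
Proof.
case: HU => [[mu [Hm Hu]] Hpr].
move=> f; have [n] := ubnP (mu f); elim: n f => // n IH f Hn g f0 g0 H.
have [fu|nfu] := boolP (f \is a GRing.unit).
  by exists (g / f); rewrite divrK.
have [pi [f1 [ipi Ef lt]]] := irr_factor (conj Hm Hu) f0 nfu.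
have pi0 : pi != 0 by case: ipi.
have f10 : f1 != 0 by apply: contraNneq f0 => e; rewrite Ef e mulr0.
have : dv pi g by have := H pi ipi 1%N; rewrite expr1; apply; exists f1; rewrite Ef mulrC.
move=> [g1 Eg].
have g10 : g1 != 0 by apply: contraNneq g0 => e; rewrite Eg e mul0r.
have IH1 : dv f1 g1.
  apply: (IH f1) => //; first by apply: leq_trans lt _; rewrite -ltnS.
  move=> q iq k hk.
  have q0 : q != 0 by case: iq.
  have [[s Es]|nd] := classic (dv q pi).
    have su : s \is a GRing.unit.
      case: (proj2 (proj2 ipi) _ _ Es) => // qu; by case: iq => _ [/negP].
    have : dv (q ^+ k.+1) g.
      apply: H => //; case: hk => r Er; exists (r * s).
      rewrite Ef Er Es exprSr !mulrA; ring.
    move=> [t Et]; exists (t / s).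
    have k1 : g1 * s * q = t * q ^+ k * q.
      by rewrite -mulrA -Es -Eg Et exprSr mulrA.
    have k2 : g1 * s = t * q ^+ k by apply: (mulIf q0).
    by rewrite -(mulrK su g1) k2 mulrAC.
  apply: (dv_pow_coprime iq nd); rewrite -Eg; apply: H => //.
  case: hk => r Er; exists (pi * r); by rewrite Ef Er mulrA.
case: IH1 => r Er; exists r; rewrite Eg Ef Er; ring.
Qed.

End Div.

Lemma mmap_ext (n : nat) (A S : nzRingType) (f1 f2 : A -> S) (h1 h2 : 'I_n -> S) (p : {mpoly A[n]}) :
  f1 =1 f2 -> h1 =1 h2 -> mmap f1 h1 p = mmap f2 h2 p.
Proof.
move=> ef eh; rewrite /mmap; apply: eq_bigr => m _.
by rewrite ef (mmap1_eq _ eh).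
Qed.

Lemma mmap_morph (n : nat) (A S T : nzRingType) (g : {rmorphism S -> T}) (f : A -> S) (h : 'I_n -> S) (p : {mpoly A[n]}) :
  g (mmap f h p) = mmap (g \o f) (g \o h) p.
Proof.
rewrite /mmap rmorph_sum; apply: eq_bigr => m _.
rewrite rmorphM /mmap1 rmorph_prod; congr (_ * _); apply: eq_bigr => i _.
by rewrite rmorphXn.
Qed.

Lemma mmap_idE (n : nat) (A : nzRingType) (p : {mpoly A[n]}) : mmap (@mpolyC n A) (fun i => 'X_i) p = p.
Proof.
rewrite -[RHS]comp_mpoly_id /comp_mpoly; apply: mmap_ext => // i.
by rewrite tnth_mktuple.
Qed.

Section MxAct.
Variable C : comNzRingType.

Lemma mx_actM (A B : 'M[C]_3) f : mx_act (A *m B) f = mx_act B (mx_act A f).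
Proof.
pose tA : 3.-tuple {mpoly C[3]} := [tuple \sum_(j < 3) A i j *: 'X_j | i < 3].
pose tB : 3.-tuple {mpoly C[3]} := [tuple \sum_(j < 3) B i j *: 'X_j | i < 3].
pose tAB : 3.-tuple {mpoly C[3]} := [tuple \sum_(j < 3) (A *m B) i j *: 'X_j | i < 3].
change (f \mPo tAB = (f \mPo tA) \mPo tB).
transitivity (mmap ((comp_mpoly tB) \o (@mpolyC 3 C)) ((comp_mpoly tB) \o tnth tA) f); last first.
  by rewrite {2}/comp_mpoly (mmap_morph (comp_mpoly tB)).
rewrite /comp_mpoly; apply: mmap_ext => [c|i] /=; first by rewrite -/(comp_mpoly tB _) comp_mpolyC.
rewrite !tnth_mktuple -/(comp_mpoly tB _) raddf_sum /=.
under [RHS]eq_bigr => j _ do rewrite comp_mpolyZ comp_mpolyXU -tnth_nth tnth_mktuple scaler_sumr.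
rewrite exchange_big /=; apply: eq_bigr => k _.
by rewrite mxE scaler_suml; apply: eq_bigr => j _; rewrite scalerA.
Qed.

Lemma mx_act1 (f : {mpoly C[3]}) : mx_act (1%:M : 'M[C]_3) f = f.
Proof.
rewrite /mx_act /comp_mpoly -[RHS]mmap_idE; apply: mmap_ext => // i.
rewrite tnth_mktuple (bigD1 i) //= big1 => [|j /negPf ji]; last by rewrite mxE eq_sym ji scale0r.
by rewrite mxE eqxx scale1r addr0.
Qed.

Lemma mx_actZ (A : 'M[C]_3) c (f : {mpoly C[3]}) : mx_act A (c *: f) = c *: mx_act A f.
Proof. exact: comp_mpolyZ. Qed.

Lemma mx_act0 (A : 'M[C]_3) : mx_act A 0 = 0.
Proof. exact: comp_mpoly0. Qed.

End MxAct.

Lemma poly_morphE (A B : comNzRingType) (g : {rmorphism {poly A} -> B}) (P : {poly A}) :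
  g P = (map_poly (g \o polyC) P).[g 'X].
Proof.
elim/poly_ind: P => [|P c IH]; first by rewrite rmorph0 map_poly0 horner0.
rewrite rmorphD rmorphM IH rmorphD rmorphM /= map_polyX map_polyC /=.
by rewrite hornerMXaddC.
Qed.

Lemma map_polyC_hornerX (A : comNzRingType) (P : {poly A}) : (map_poly polyC P).['X] = P.
Proof.
elim/poly_ind: P => [|P c IH]; first by rewrite map_poly0 horner0.
by rewrite rmorphD rmorphM /= map_polyX map_polyC hornerMXaddC IH.
Qed.

Section Iso.
Variable F : fieldType.
Notation R1 := {poly F}.
Notation R2 := {poly R1}.
Notation R3 := {poly R2}.
Notation M := {mpoly F[3]}.

Definition hv (i : 'I_3) : R3 :=
  if (i : nat) == 0%N then 'X%:P%:P else if (i : nat) == 1%N then 'X%:P else 'X.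
Definition phi (p : M) : R3 := mmap (polyC \o polyC \o polyC) hv p.
Lemma phi_rm : {rmorphism M -> R3}.
Proof. exact: (mmap (polyC \o polyC \o polyC) hv). Defined.
Lemma phiE p : phi_rm p = phi p. Proof. by []. Qed.

Definition cf1 : commr_rmorph (@mpolyC 3 F) 'X_0 := fun a => mulrC _ _.
Definition psi1 := horner_morph cf1.
HB.instance Definition _ := GRing.RMorphism.copy psi1 (horner_morph cf1).
Definition cf2 : commr_rmorph psi1 'X_1 := fun a => mulrC _ _.
Definition psi2 := horner_morph cf2.
HB.instance Definition _ := GRing.RMorphism.copy psi2 (horner_morph cf2).
Definition cf3 : commr_rmorph psi2 'X_2 := fun a => mulrC _ _.
Definition psi3 := horner_morph cf3.
HB.instance Definition _ := GRing.RMorphism.copy psi3 (horner_morph cf3).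
Lemma psi1C a : psi1 a%:P = a%:MP. Proof. exact: (horner_morphC cf1). Qed.
Lemma psi2C a : psi2 a%:P = psi1 a. Proof. exact: (horner_morphC cf2). Qed.
Lemma psi3C a : psi3 a%:P = psi2 a. Proof. exact: (horner_morphC cf3). Qed.
Lemma psi1X : psi1 'X = 'X_0. Proof. exact: (horner_morphX cf1). Qed.
Lemma psi2X : psi2 'X = 'X_1. Proof. exact: (horner_morphX cf2). Qed.
Lemma psi3X : psi3 'X = 'X_2. Proof. exact: (horner_morphX cf3). Qed.

Lemma psi_phi p : psi3 (phi p) = p.
Proof.
rewrite /phi; transitivity (mmap (psi3 \o (polyC \o polyC \o polyC)) (psi3 \o hv) p).
  exact: (mmap_morph psi3).
rewrite -[RHS]mmap_idE; apply: mmap_ext => [c|i] /=.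
  by rewrite psi3C psi2C psi1C.
rewrite /hv; case: i => [[|[|[|k]]] hk] //=.
- by rewrite psi3C psi2C psi1X.
- by rewrite psi3C psi2X.
- by rewrite psi3X.
Qed.

Lemma phiC c : phi c%:MP = c%:P%:P%:P.
Proof. by rewrite /phi mmapC. Qed.
Lemma phiX i : phi 'X_i = hv i.
Proof. by rewrite /phi mmapX mmap1U. Qed.

Lemma horner_polyC_comp (A B : comNzRingType) (g : A -> B) (P : {poly A}) (x : B) :
  (map_poly (polyC \o g) P).[x%:P] = ((map_poly g P).[x])%:P.
Proof. by rewrite map_poly_comp horner_map. Qed.

Lemma phi_psi1 q : phi (psi1 q) = q%:P%:P.
Proof.
transitivity ((phi_rm \o psi1) q); first by [].
rewrite poly_morphE /= psi1X phiE phiX /hv /=.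
rewrite (eq_map_poly (g := polyC \o (polyC \o polyC))); last first.
  by move=> c /=; rewrite psi1C phiE phiC.
by rewrite horner_polyC_comp horner_polyC_comp map_polyC_hornerX.
Qed.

Lemma phi_psi2 Q : phi (psi2 Q) = Q%:P.
Proof.
transitivity ((phi_rm \o psi2) Q); first by [].
rewrite poly_morphE /= psi2X phiE phiX /hv /=.
rewrite (eq_map_poly (g := polyC \o polyC)); last first.
  by move=> c /=; rewrite psi2C phiE phi_psi1.
by rewrite horner_polyC_comp map_polyC_hornerX.
Qed.

Lemma phi_psi3 P : phi (psi3 P) = P.
Proof.
transitivity ((phi_rm \o psi3) P); first by [].
rewrite poly_morphE /= psi3X phiE phiX /hv /=.
rewrite (eq_map_poly (g := polyC)); last first.
  by move=> c /=; rewrite psi3C phiE phi_psi2.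
by rewrite map_polyC_hornerX.
Qed.

End Iso.

Lemma primeP_transfer (A B : idomainType) (f : A -> B) (g : B -> A) :
  (forall x y, f (x * y) = f x * f y) -> (forall x y, g (x * y) = g x * g y) ->
  f 1 = 1 -> g 1 = 1 ->
  cancel f g -> cancel g f -> primeP B -> primeP A.
Proof.
move=> fM gM f1 g1 fK gK HB.
have g0 : g 0 = 0 by rewrite -(mulr0 (f 0)) gM fK mul0r.
have fu : forall x, x \is a GRing.unit -> f x \is a GRing.unit.
  by move=> x /unitrPr [y Ey]; apply/unitrPr; exists (f y); rewrite -fM Ey f1.
have gu : forall x, x \is a GRing.unit -> g x \is a GRing.unit.
  by move=> x /unitrPr [y Ey]; apply/unitrPr; exists (g y); rewrite -gM Ey g1.
move=> p [p0 [pu Hp]] x y [r Er].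
have ifp : irr (f p).
  split; first by apply: contraNneq p0 => e; rewrite -(fK p) e g0.
  split; first by apply: contra pu => u; rewrite -(fK p); apply: gu.
  move=> a b e; have : p = g a * g b by rewrite -(fK p) e gM.
  case/Hp => u; [left|right]; [rewrite -(gK a) | rewrite -(gK b)]; exact: fu.
have : dv (f p) (f x * f y) by exists (f r); rewrite -!fM Er.
case/(HB _ ifp) => -[s Es]; [left|right]; exists (g s);
  by rewrite -[LHS]fK Es gM fK.
Qed.

Lemma UFD_R3 (F : fieldType) : UFD [the idomainType of {poly {poly {poly F}}}].
Proof. by do 3 apply: UFD_poly; apply: UFD_field. Qed.

Lemma msize_unit (F : fieldType) (p : {mpoly F[3]}) : p != 0 ->
  (msize p == 1%N) = (p \is a GRing.unit).
Proof.
move=> p0; apply/idP/idP.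
  move/eqP => s1; have E := msize1_polyC (eq_leq s1).
  have c0 : p@_0 != 0 by apply: contraNneq p0 => e; rewrite E e.
  apply/unitrPr; exists (p@_0)^-1%:MP; by rewrite {1}E -mpolyCM mulfV.
move/unitrPr => [q Eq].
have q0 : q != 0 by apply/eqP => e; move: Eq; rewrite e mulr0 => /eqP; rewrite eq_sym oner_eq0.
have := msizeM p0 q0; rewrite Eq msize1.
have := msize_poly_eq0 p; have := msize_poly_eq0 q; rewrite (negbTE p0) (negbTE q0).
case: (msize p) => [|[|m]] //; case: (msize q) => [|[|k]] // => *; lia.
Qed.

Lemma UFD_mpoly (F : fieldType) : UFD [the idomainType of {mpoly F[3]}].
Proof.
split.
  exists (fun p : {mpoly F[3]} => (msize p).-1); split.
    move=> a b a0 b0; rewrite msizeM //.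
    have := msize_poly_eq0 a; have := msize_poly_eq0 b; rewrite (negbTE a0) (negbTE b0).
    case: (msize a) => [|m] //; case: (msize b) => [|k] //= _ _; lia.
  move=> a a0; rewrite -msize_unit //; have := msize_poly_eq0 a; rewrite (negbTE a0).
  case: (msize a) => [|[|m]] //.
apply: (@primeP_transfer [the idomainType of {mpoly F[3]}] [the idomainType of {poly {poly {poly F}}}] (@phi F) (@psi3 F)).
- by move=> x y; rewrite -!phiE rmorphM.
- by move=> x y; rewrite rmorphM.
- by rewrite -phiE rmorph1.
- by rewrite rmorph1.
- by move=> p; rewrite psi_phi.
- by move=> P; rewrite phi_psi3.
- exact: (proj2 (UFD_R3 F)).
Qed.

Section Eigen.
Variable F : fieldType.

Lemma irr_mirr (p : {mpoly F[3]}) : irr p -> mirreducible p.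
Proof.
move=> [p0 [pu H]]; split.
  have := msize_unit p0; have := msize_poly_eq0 p; rewrite (negbTE p0) (negbTE pu).
  by case: (msize p) => [|[|k]].
move=> a b e.
have a0 : a != 0 by apply: contraNneq p0 => ea; rewrite e ea mul0r.
have b0 : b != 0 by apply: contraNneq p0 => eb; rewrite e eb mulr0.
case: (H a b e) => u; [left|right]; [rewrite -(msize_unit a0) in u | rewrite -(msize_unit b0) in u];
  by rewrite (eqP u).
Qed.

Lemma sd_dv (f g : {mpoly F[3]}) : f != 0 -> g != 0 -> same_divisor g f -> dv f g /\ dv g f.
Proof.
move=> f0 g0 sd; split.
  apply: (div_main (UFD_mpoly F)) => // p ip k h.
  exact: (proj2 (sd p (irr_mirr ip) k)).
apply: (div_main (UFD_mpoly F)) => // p ip k h.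
exact: (proj1 (sd p (irr_mirr ip) k)).
Qed.

Lemma eig (M : 'M[F]_3) (f : {mpoly F[3]}) : M \in unitmx -> f != 0 ->
  same_divisor (pushforward_poly M f) f ->
  exists a b : F, [/\ mx_act M f = a *: f, mx_act (invmx M) f = b *: f & a * b = 1].
Proof.
move=> Mu f0; rewrite /pushforward_poly; set g := mx_act (invmx M) f => sd.
have Mg : mx_act M g = f by rewrite /g -mx_actM mulVmx // mx_act1.
have g0 : g != 0 by apply: contraNneq f0 => e; rewrite -Mg e mx_act0.
have [[r Er] [s Es]] := sd_dv f0 g0 sd.
have sr : s * r = 1.
  apply: (mulIf f0); rewrite mul1r -mulrA -Er; exact: esym.
have ru : r \is a GRing.unit by apply/unitrPr; exists s; rewrite mulrC.
have r0 : r != 0 by apply: contraTneq ru => ->; rewrite unitr0.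
have : msize r == 1%N by rewrite (msize_unit r0).
move/eqP/eq_leq/msize1_polyC => Er0.
set c := r@_0 in Er0.
have c0 : c != 0 by apply: contraNneq r0 => e; rewrite Er0 e mpolyC0.
have Eg : g = c *: f by rewrite Er Er0 mul_mpolyC.
exists c^-1, c; split; last by rewrite mulVf.
- by apply: (scalerI c0); rewrite scalerA mulfV // scale1r -mx_actZ -Eg Mg.
- exact: Eg.
Qed.

End Eigen.

Section Group.
Variables (F : fieldType) (gT : finGroupType) (rho : gT -> 'M[F]_3).
Hypothesis Hrep : proj_faithful_rep rho.

Local Notation pe := (@proj_eq F).

Lemma pe_refl A : pe A A.
Proof. by exists 1; rewrite oner_neq0 scale1r. Qed.
Lemma pe_sym A B : pe A B -> pe B A.
Proof.
move=> [c [c0 ->]]; exists c^-1; split; first by rewrite invr_eq0.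
by rewrite scalerA mulVf // scale1r.
Qed.
Lemma pe_trans A B D : pe A B -> pe B D -> pe A D.
Proof.
move=> [c [c0 ->]] [d [d0 ->]]; exists (c * d); split; first by rewrite mulf_neq0.
by rewrite scalerA.
Qed.
Lemma pe_mul A A' B B' : pe A A' -> pe B B' -> pe (A *m B) (A' *m B').
Proof.
move=> [a [a0 ->]] [b [b0 ->]]; exists (a * b); split; first by rewrite mulf_neq0.
by rewrite -scalemxAl -scalemxAr scalerA.
Qed.

Lemma rho_unit x : rho x \in unitmx.
Proof. by case: Hrep. Qed.

Lemma rho_mul x y : pe (rho (x * y)%g) (rho x *m rho y).
Proof. by case: Hrep => _ H _; apply: H. Qed.

Lemma rho_1 : pe (rho 1%g) 1%:M.
Proof.
have [c [c0 E]] := rho_mul 1%g 1%g; rewrite mulg1 in E.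
exists c^-1; split; first by rewrite invr_eq0.
have : rho 1%g *m invmx (rho 1%g) = c *: (rho 1%g *m rho 1%g) *m invmx (rho 1%g).
  by rewrite -E.
rewrite mulmxV ?rho_unit // -scalemxAl -mulmxA mulmxV ?rho_unit // mulmx1 => e.
by rewrite e scalerA mulVf // scale1r.
Qed.

Lemma rho_inv x : pe (rho x^-1%g) (invmx (rho x)).
Proof.
have h := rho_mul x^-1%g x; rewrite mulVg in h.
have [c [c0 E]] := pe_trans (pe_sym h) rho_1.
exists c; split => //.
have : rho x^-1%g *m rho x *m invmx (rho x) = c *: 1%:M *m invmx (rho x) by rewrite E.
by rewrite -mulmxA mulmxV ?rho_unit // mulmx1 -scalemxAl mul1mx.
Qed.

Definition cm (A B : 'M[F]_3) := invmx A *m invmx B *m A *m B.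
Definition prodl (s : seq (gT * gT)) : 'M[F]_3 :=
  foldr (fun xy M => cm (rho xy.1) (rho xy.2) *m M) 1%:M s.
Definition Gt (A : 'M[F]_3) : Prop := exists s, A = prodl s.

Lemma cm_pe x y : pe (cm (rho x) (rho y)) (rho [~ x, y]%g).
Proof.
rewrite /cm /commg /conjg !mulgA.
apply: pe_sym; apply: pe_trans (rho_mul _ _) _; apply: pe_mul; last exact: pe_refl.
apply: pe_trans (rho_mul _ _) _; apply: pe_mul; last exact: pe_refl.
apply: pe_trans (rho_mul _ _) _; apply: pe_mul; exact: rho_inv.
Qed.

Lemma prodl_cat s1 s2 : prodl (s1 ++ s2) = prodl s1 *m prodl s2.
Proof.
elim: s1 => [|xy s IH] /=; first by rewrite mul1mx.
by rewrite IH mulmxA.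
Qed.

Lemma cm_unit A B : A \in unitmx -> B \in unitmx -> cm A B \in unitmx.
Proof. by move=> Au Bu; rewrite /cm !unitmx_mul !unitmx_inv Au Bu. Qed.

Lemma prodl_unit s : prodl s \in unitmx.
Proof.
elim: s => [|xy s IH] /=; first exact: unitmx1.
by rewrite unitmx_mul IH cm_unit ?rho_unit.
Qed.

Lemma cm_inv A B : A \in unitmx -> B \in unitmx -> invmx (cm A B) = cm B A.
Proof.
move=> Au Bu.
have e : cm A B *m cm B A = 1%:M.
  rewrite /cm !mulmxA -[invmx A *m invmx B *m A *m B *m invmx B]mulmxA mulmxV // mulmx1.
  rewrite -[invmx A *m invmx B *m A *m invmx A]mulmxA mulmxV // mulmx1.
  by rewrite -[invmx A *m invmx B *m B]mulmxA mulVmx // mulmx1 mulVmx.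
have u := cm_unit Au Bu.
by rewrite -[RHS]mul1mx -(mulVmx u) -mulmxA e mulmx1.
Qed.

Lemma invmxM3 (A B : 'M[F]_3) : A \in unitmx -> B \in unitmx -> invmx (A *m B) = invmx B *m invmx A.
Proof. move=> Au Bu; exact: (@invrM _ A B Au Bu). Qed.

Lemma prodl_inv s : invmx (prodl s) = prodl (rev (map (fun xy => (xy.2, xy.1)) s)).
Proof.
elim: s => [|xy s IH] /=; first by rewrite invmx1.
rewrite invmxM3 ?prodl_unit ?cm_unit ?rho_unit // IH cm_inv ?rho_unit //.
by rewrite rev_cons -cats1 prodl_cat /= mulmx1.
Qed.

Lemma det_prodl s : \det (prodl s) = 1.
Proof.
elim: s => [|xy s IH] /=; first exact: det1.
rewrite det_mulmx IH mulr1 /cm !det_mulmx !det_inv.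
have a0 : \det (rho xy.1) != 0 by rewrite -unitfE -unitmxE rho_unit.
have b0 : \det (rho xy.2) != 0 by rewrite -unitfE -unitmxE rho_unit.
by rewrite [_^-1 / _ * _]mulrAC mulVf // mul1r mulVf.
Qed.

Lemma Gt_SL3 : SL3_subgroup Gt.
Proof.
split.
- by exists [::].
- by move=> A B [s1 ->] [s2 ->]; exists (s1 ++ s2); rewrite prodl_cat.
- by move=> A [s ->]; eexists; apply: prodl_inv.
- by move=> A [s ->]; apply: det_prodl.
Qed.

Lemma prodl_pe s : exists g, pe (prodl s) (rho g).
Proof.
elim: s => [|[x y] s [g IH]] /=; first by exists 1%g; exact: pe_sym rho_1.
exists ([~ x, y] * g)%g; apply: pe_trans (pe_sym (rho_mul _ _)).
exact: pe_mul (cm_pe x y) IH.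
Qed.

Hypothesis Hsimple : simple [set: gT].
Hypothesis Hnab : ~~ abelian [set: gT].

Lemma all_in_der (g : gT) : g \in ([~: [set: gT], [set: gT]])%g.
Proof.
have := simpleP _ Hsimple => -[_ H].
have nD := der_normal 1 [set: gT]%G.
case: (H _ nD) => E.
  by case/negP: Hnab; apply/derG1P; exact: E.
have : g \in gval (derived_at_group [set: gT]%G 1) by rewrite E inE.
by [].
Qed.

Lemma Gt_image : proj_image_eq rho Gt.
Proof.
split.
  by move=> A [s ->]; apply: prodl_pe.
move=> g; have := all_in_der g; rewrite /commutator => /gen_prodgP [n [c Hc ->]].
pose Q (h : gT) := exists A, Gt A /\ pe A (rho h).
apply: (big_ind Q).
- by exists 1%:M; split; [exists [::] | exact: pe_sym rho_1].
- move=> h1 h2 [A1 [[s1 E1] P1]] [A2 [[s2 E2] P2]]; exists (A1 *m A2); split.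
    by exists (s1 ++ s2); rewrite prodl_cat E1 E2.
  by apply: pe_trans (pe_sym (rho_mul _ _)); apply: pe_mul.
- move=> i _; case/imset2P: (Hc i) => x y _ _ ->.
  exists (cm (rho x) (rho y) *m 1%:M); split; first by exists [:: (x, y)].
  by rewrite mulmx1; exact: cm_pe.
Qed.

End Group.

Lemma prodl_act (F : fieldType) (gT : finGroupType) (rho : gT -> 'M[F]_3)
  (Hrep : proj_faithful_rep rho) (f : {mpoly F[3]}) : f != 0 ->
  (forall g, same_divisor (pushforward_poly (rho g) f) f) ->
  forall s, mx_act (prodl rho s) f = f.
Proof.
move=> f0 Hf.
have eg x := eig (rho_unit Hrep x) f0 (Hf x).
elim=> [|[x y] s IH] /=; first exact: mx_act1.
rewrite mx_actM [mx_act (cm _ _) f](_ : _ = f) //.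
have [aA [bA [EA EiA hA]]] := eg x.
have [aB [bB [EB EiB hB]]] := eg y.
rewrite /cm !mx_actM EiA !mx_actZ EiB !mx_actZ EA !mx_actZ EB !scalerA.
rewrite -[RHS]scale1r; congr (_ *: _).
transitivity ((aA * bA) * (aB * bB)); first by ring.
by rewrite hA hB mulr1.
Qed.

Unset Implicit Arguments.

Theorem mainTheorem8 (R : realType) (gT : finGroupType)
  (rho : gT -> 'M[(complex R)]_3) :
  proj_faithful_rep rho ->
  simple [set: gT] -> ~~ abelian [set: gT] ->
  exists Gt : 'M[(complex R)]_3 -> Prop,
    [/\ SL3_subgroup Gt, proj_image_eq rho Gt &
      forall (d : nat) (f : {mpoly (complex R)[3]}),
        (0 < d)%N -> f != 0 -> f \is d.-homog ->
        (forall g : gT, same_divisor (pushforward_poly (rho g) f) f) ->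
        exists h : {mpoly (complex R)[3]},
          [/\ exists e : nat, h \is e.-homog,
              (forall A, Gt A -> mx_act A h = h)
            & same_divisor h f]].
Proof.
move=> Hrep Hs Hnab.
exists (Gt rho); split; [exact: Gt_SL3 Hrep | exact: Gt_image Hrep Hs Hnab |].
move=> d f d0 f0 hom Hf; exists f; split.
- by exists d.
- by move=> A [s ->]; apply: prodl_act.
- by move=> p _ k.
Qed.
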